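(* Let $\sigma=(1\,2\,\cdots\,n)\in\mathrm{Sym}(n)$. For every $\epsilon>0$, for all sufficiently large $n$ there exist two finite generating sets $S_{\rm pos}$ and $S_{\rm neg}$ of $\mathrm{Sym}(n)$ (each symmetric, not containing $e$) such that: with respect to $S_{\rm pos}$, $|\sigma|=2$, $\mathrm{Av}(\sigma)<1+\epsilon$ and $\kappa(\sigma)>\frac{1-\epsilon}{2}$; and with respect to $S_{\rm neg}$, $|\sigma|=1$, $\mathrm{Av}(\sigma)>3-\epsilon$ and $\kappa(\sigma)<-2+\epsilon$.
   Context: For a group with finite generating set $S$ ($S=S^{-1}$, $e\notin S$), $|x|$ is word length, $\mathrm{Av}(g)=\frac{1}{|S|}\sum_{a\in S}|a^{-1}ga|$, and for $g\neq e$ the curvature is $\kappa(g)=\frac{|g|-\mathrm{Av}(g)}{|g|}$. *)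

(* Defs.v *)
From mathcomp Require Import all_boot all_order all_algebra all_fingroup.
From mathcomp Require Import reals.
Set Implicit Arguments. Unset Strict Implicit. Unset Printing Implicit Defensive.
Import GRing.Theory Num.Theory.
Local Open Scope group_scope.

(* The n-cycle sigma = (1 2 ... n) on {0,...,n-1}: i |-> i+1 mod n. *)
Definition ncycle (n : nat) : {perm 'I_n} := perm (@ordS_inj n).

Section WordLength.
Variable gT : finGroupType.
Implicit Types (S : {set gT}) (g : gT).

Definition sym_gen_set S : Prop :=
  [/\ <<S>> = [set: gT], (forall a, a \in S -> a^-1 \in S) & 1 \notin S].

Fixpoint words_of_length S (k : nat) : {set gT} :=
  if k is k'.+1 then (words_of_length S k' * S)%g else [set 1].

(* Word length: least k such that g is a product of k elements of S
   (searched in 0..#|gT|, which suffices whenever S generates). *)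
Definition wordlen S g : nat :=
  find (fun k => g \in words_of_length S k) (iota 0 #|gT|.+1).

Definition Av (R : numFieldType) S g : R :=
  ((\sum_(a in S) (wordlen S (g ^ a))%:R) / (#|S|)%:R)%R.

Definition kappa (R : numFieldType) S g : R :=
  (((wordlen S g)%:R - Av R S g) / (wordlen S g)%:R)%R.
End WordLength.

(* Main.v *)
Require Import Defs.
From mathcomp Require Import all_boot all_order all_algebra all_fingroup.
From mathcomp Require Import reals.
From mathcomp Require Import zify ring lra.
Import Order.TTheory GRing.Theory Num.Theory.
Set Implicit Arguments. Unset Strict Implicit. Unset Printing Implicit Defensive.
Local Open Scope group_scope.

Section WL.
Variable gT : finGroupType.
Implicit Types (S : {set gT}) (g : gT).
Local Open Scope group_scope.

Lemma wl_le S g k : (k <= #|gT|)%N -> g \in words_of_length S k ->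
  (wordlen S g <= k)%N.
Proof.
move=> hk hg; rewrite /wordlen leqNgt; apply/negP => /(before_find 0).
by rewrite nth_iota ?add0n ?hg //; lia.
Qed.

Lemma wl_ge S g k : (k <= #|gT|.+1)%N ->
  (forall j, (j < k)%N -> g \notin words_of_length S j) ->
  (k <= wordlen S g)%N.
Proof.
move=> hk H; rewrite /wordlen leqNgt; apply/negP => hlt.
have hh : has (fun k => g \in words_of_length S k) (iota 0 #|gT|.+1).
  by rewrite has_find size_iota; lia.
have := nth_find 0 hh; rewrite nth_iota; last first.
  by move: hh; rewrite has_find size_iota.
by rewrite add0n; apply/negP/H.
Qed.

Lemma W1 S : words_of_length S 1 = S.
Proof. by rewrite /= -set1gE mul1g. Qed.

Lemma W2P S g : reflect (exists2 u, u \in S & exists2 v, v \in S & g = u * v)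
  (g \in words_of_length S 2).
Proof.
rewrite /= -set1gE mul1g; apply: (iffP mulsgP).
  by case=> u v hu hv ->; exists u => //; exists v.
by case=> u hu [v hv ->]; exists u v.
Qed.

End WL.

Section Cyc.
Variable n : nat.
Hypothesis n5 : (5 <= n)%N.
Local Notation s := (ncycle n).
Let x0 : 'I_n := Ordinal (leq_trans (isT : (0 < 5)%N) n5).

Lemma sE x : val (s x) = x.+1 %% n.
Proof. by rewrite /ncycle permE. Qed.

Lemma sX k x : val ((s ^+ k) x) = (x + k) %% n.
Proof.
rewrite permX; elim: k => [|k IH]; first by rewrite addn0 modn_small.
by rewrite iterS sE -addn1 IH modnDml addn1 addnS.
Qed.

Lemma nofix k x : (0 < k < n)%N -> (s ^+ k) x != x.
Proof.
move=> /andP[k0 kn]; apply/negP; rewrite -val_eqE sX => /eqP h.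
have : (x + k == x + 0 %[mod n])%N by rewrite h addn0 modn_small.
rewrite eqn_modDl mod0n modn_small //; lia.
Qed.

Lemma s1 x : s x != x.
Proof. have := @nofix 1 x; rewrite permX /=; apply; lia. Qed.
Lemma s2 x : s (s x) != x.
Proof. have := @nofix 2 x; rewrite permX /=; apply; lia. Qed.
Lemma s3 x : s (s (s x)) != x.
Proof. have := @nofix 3 x; rewrite permX /=; apply; lia. Qed.

Lemma avoid4 (p1 p2 p3 p4 : 'I_n) : exists z : 'I_n, [&& z != p1, z != p2, z != p3 & z != p4].
Proof.
case: (pickP (fun z : 'I_n => z \notin [:: p1; p2; p3; p4])) => [z|H].
  by move=> hz; exists z; move: hz; rewrite !inE; do 4 case: eqP.
have : 'I_n \subset [:: p1; p2; p3; p4].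
  by apply/subsetP => z _; have := H z; move/negbFE.
move/subset_leq_card; rewrite card_ord => h.
have := card_size [:: p1; p2; p3; p4]; rewrite /= => h2; have := leq_trans h h2; lia.
Qed.

Lemma conj_nofix (a : {perm 'I_n}) z : (s ^ a) z != z.
Proof.
apply/negP; rewrite -{1 2}(permKV a z) permJ => /eqP /perm_inj /eqP; apply/negP/s1.
Qed.


Definition Tn : {set {perm 'I_n}} :=
  [set t | [exists x : 'I_n * 'I_n, (x.1 != x.2) && (t == tperm x.1 x.2)]].

Lemma inTn t : reflect (exists x y, x != y /\ t = tperm x y) (t \in Tn).
Proof.
rewrite inE; apply: (iffP existsP).
  by case=> [[x y]] /= /andP[h /eqP ->]; exists x, y.
by case=> x [y [h ->]]; exists (x, y); rewrite /= h eqxx.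
Qed.

Lemma t_fix (x y : 'I_n) : exists z, tperm x y z = z.
Proof.
have [z /and4P[h1 h2 _ _]] := avoid4 x y x y.
by exists z; rewrite tpermD // eq_sym.
Qed.

Lemma tt_fix (x y x' y' : 'I_n) : exists z, (tperm x y * tperm x' y') z = z.
Proof.
have [z /and4P[h1 h2 h3 h4]] := avoid4 x y x' y'.
by exists z; rewrite permM !tpermD // eq_sym.
Qed.

Lemma conj_t_ne_s (x y : 'I_n) : x != y -> s ^ tperm x y != s.
Proof.
move=> hxy; apply/eqP => h; have := permJ s (tperm x y) x.
rewrite h tpermL.
have [e1|n1] := eqVneq (s x) x; first by move: (s1 x); rewrite e1 eqxx.
have [e2|n2] := eqVneq (s x) y.
  rewrite e2 tpermR => e3; move: (s2 x); by rewrite e2 e3 eqxx.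
by rewrite tpermD // 1?eq_sym // => /perm_inj /eqP; rewrite eq_sym (negbTE hxy).
Qed.

Lemma conj_t_z0 (x y : 'I_n) : exists z, (s ^ tperm x y) z = s z.
Proof.
have [z /and4P[h1 h2 h3 h4]] := avoid4 x y (s^-1 x) (s^-1 y).
exists z.
have hz : tperm x y z = z by rewrite tpermD // eq_sym.
rewrite -{1}hz permJ tpermD //.
  by apply/eqP => e; move: h3; rewrite e permK eqxx.
by apply/eqP => e; move: h4; rewrite e permK eqxx.
Qed.


Definition Sneg := [set s; s^-1] :|: Tn.

Lemma Sneg_cases u : u \in Sneg ->
  [\/ u = s, u = s^-1 | exists x y, x != y /\ u = tperm x y].
Proof.
by rewrite in_setU in_set2 => /orP[/orP[/eqP->|/eqP->]|/inTn]; constructor.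
Qed.

Lemma neg_far (x y : 'I_n) : x != y -> forall j, (j < 3)%N ->
  s ^ tperm x y \notin words_of_length Sneg j.
Proof.
move=> hxy [|[|[|]]] // _.
- rewrite /= in_set1; apply/eqP => h.
  by have := conj_nofix (tperm x y) x; rewrite h perm1 eqxx.
- rewrite W1; apply/negP => /Sneg_cases [h|h|[x' [y' [_ h]]]].
  + by move: (conj_t_ne_s hxy); rewrite h eqxx.
  + have [z hz] := conj_t_z0 x y; rewrite h in hz.
    by move: (s2 z); rewrite -hz permKV eqxx.
  + have [z hz] := t_fix x' y'.
    by move: (conj_nofix (tperm x y) z); rewrite h hz eqxx.
- apply/negP => /W2P [u /Sneg_cases hu [v /Sneg_cases hv h]].
  have hodd : odd_perm (u * v) = odd_perm s by rewrite -h odd_permJ.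
  have [z hz] := conj_t_z0 x y; rewrite h in hz.
  case: hu => [->|->|[x1 [y1 [h1 ->]]]] in h hz hodd *;
  case: hv => [->|->|[x2 [y2 [h2 ->]]]] in h hz hodd *.
  + by move: hz; rewrite permM => /perm_inj /eqP; rewrite (negbTE (s1 z)).
  + by move: (conj_nofix (tperm x y) z); rewrite h mulgV perm1 eqxx.
  + by move: hodd; rewrite odd_permM odd_tperm h2; case: (odd_perm s).
  + by move: (conj_nofix (tperm x y) z); rewrite h mulVg perm1 eqxx.
  + move: (s3 z); rewrite -hz permM.
    by rewrite permKV permKV eqxx.
  + by move: hodd; rewrite odd_permM odd_tperm h2 odd_permV; case: (odd_perm s).
  + by move: hodd; rewrite odd_permM odd_tperm h1; case: (odd_perm s).
  + by move: hodd; rewrite odd_permM odd_tperm h1 odd_permV; case: (odd_perm s).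
  + have [w hw] := tt_fix x1 y1 x2 y2.
    by move: (conj_nofix (tperm x y) w); rewrite h hw eqxx.
Qed.

Lemma card_gT : #|{perm 'I_n}| = n`!.
Proof. exact: card_Sn. Qed.

Lemma fact_ge : (n * (n - 1) * (n - 2) <= n`!)%N.
Proof.
case: n n5 => [|[|[|m]]] // _.
rewrite !factS !subSS !subn0 !mulnA; exact: leq_pmulr (fact_gt0 m).
Qed.

Lemma Sneg_gen : sym_gen_set Sneg.
Proof.
split.
- apply/eqP; rewrite eqEsubset subsetT /=; apply/subsetP => g _.
  have [ts -> hts] := prod_tpermP g.
  rewrite big_seq; apply: group_prod => t ht; apply: mem_gen.
  rewrite in_setU; apply/orP; right; apply/inTn; exists t.1, t.2; split => //.
  by move/allP: hts => /(_ t ht).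
- move=> a /Sneg_cases [->|->|[x [y [h ->]]]]; rewrite in_setU in_set2.
  + by rewrite eqxx orbT.
  + by rewrite invgK eqxx.
  + by rewrite tpermV; apply/orP; right; apply/inTn; exists x, y.
- apply/negP => /Sneg_cases [h|h|[x [y [hxy h]]]].
  + by have := s1 x0; rewrite -h perm1 eqxx.
  + by have := s1 x0; rewrite -(invgK s) -h invg1 perm1 eqxx.
  + by move: hxy; rewrite -[y](tpermL x y) -h perm1 eqxx.
Qed.

Lemma s_ne1 : s != 1.
Proof. by apply/eqP => h; have := s1 x0; rewrite h perm1 eqxx. Qed.

Lemma wl_neg : wordlen Sneg s = 1%N.
Proof.
have c : (2 <= #|{perm 'I_n}|)%N.
  rewrite card_gT; apply: leq_trans fact_ge; rewrite -[2%N]/(1*1*2)%N.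
  by apply: leq_mul; [apply: leq_mul|]; lia.
apply/eqP; rewrite eqn_leq; apply/andP; split.
  by apply: wl_le; [exact: leq_trans _ c| rewrite W1 in_setU in_set2 eqxx].
apply: wl_ge => //.
by move=> [|] // _; rewrite /= in_set1 s_ne1.
Qed.

Lemma card_Tn : (n - 1 <= #|Tn|)%N.
Proof.
have -> : (n - 1 = #|[set~ x0]|)%N by rewrite cardsC1 card_ord; lia.
rewrite -(@card_in_imset _ _ (fun j => tperm x0 j)).
  apply: subset_leq_card; apply/subsetP => t /imsetP [j hj ->].
  by apply/inTn; exists x0, j; split => //; move: hj; rewrite !inE eq_sym.
by move=> i j _ _ /= h; rewrite -(tpermL x0 i) h tpermL.
Qed.

Lemma card_Sneg : (#|Sneg| <= #|Tn| + 2)%N.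
Proof.
have [h _] := leq_card_setU [set s; s^-1] Tn.
apply: leq_trans h _; rewrite addnC leq_add2l cards2; by case: (_ != _).
Qed.

Lemma Tn_sub : Tn \subset Sneg.
Proof. exact: subsetUr. Qed.

Lemma sum_neg : (3 * #|Tn| <= \sum_(a in Sneg) wordlen Sneg (s ^ a)%g)%N.
Proof.
rewrite (big_setID Tn) /= (setIidPr Tn_sub).
apply: leq_trans (leq_addr _ _).
rewrite mulnC -sum_nat_const; apply: leq_sum => a /inTn [x [y [hxy ->]]].
have c : (2 <= #|{perm 'I_n}|)%N.
  rewrite card_gT; apply: leq_trans fact_ge; rewrite -[2%N]/(1*1*2)%N.
  by apply: leq_mul; [apply: leq_mul|]; lia.
by apply: wl_ge; [rewrite ltnS | exact: neg_far].
Qed.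

Definition Spos : {set {perm 'I_n}} := ~: [set 1; s; s^-1].

Lemma inSpos a : (a \in Spos) = [&& a != 1, a != s & a != s^-1].
Proof. by rewrite !inE; do 3 case: eqP. Qed.

Let t := tperm x0 (s x0).

Lemma sinv_nofix z : s^-1 z != z.
Proof. by apply/eqP => h; move: (s1 z); rewrite -{1}h permKV eqxx. Qed.

Lemma t_in : t \in Spos.
Proof.
have [z hz] := t_fix x0 (s x0).
rewrite inSpos; apply/and3P; split; apply/eqP => h.
- by move: (s1 x0); rewrite -{1}(tpermL x0 (s x0)) -/t h perm1 eqxx.
- by move: (s1 z); rewrite -h hz eqxx.
- by move: (sinv_nofix z); rewrite -h hz eqxx.
Qed.

Lemma st_in : s * t \in Spos.
Proof.
have [z hz] := t_fix x0 (s x0).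
have hw : (s * t) (s^-1 z) = z by rewrite permM permKV hz.
rewrite inSpos; apply/and3P; split; apply/eqP => h.
- by move: (sinv_nofix z); rewrite -{2}hw h perm1 eqxx.
- have : t = 1 by apply: (@mulgI _ s); rewrite mulg1.
  by move/eqP; move: t_in; rewrite inSpos => /andP[/negbTE ->].
- move: hw; rewrite h => e.
  by move: (s2 (s^-1 (s^-1 z))); rewrite !permKV e eqxx.
Qed.

Lemma s_eq : s = (s * t) * t.
Proof. by rewrite -mulgA tperm2 mulg1. Qed.

Lemma Spos_sym a : a \in Spos -> a^-1 \in Spos.
Proof.
rewrite !inSpos !(inv_eq invgK) invg1 invgK.
by case/and3P => -> -> ->.
Qed.

Lemma Spos_gen : sym_gen_set Spos.
Proof.
split; last by rewrite inSpos eqxx.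
- apply/eqP; rewrite eqEsubset subsetT /=; apply/subsetP => g _.
  have hs : s \in <<Spos>> by rewrite s_eq groupM // mem_gen // (st_in, t_in).
  case: (boolP (g \in Spos)) => h; first exact: mem_gen.
  move: h; rewrite inSpos !negb_and !negbK => /orP[/eqP->|/orP[/eqP->|/eqP->]] //.
  all: try exact: group1.
  exact: groupVr hs.
- exact: Spos_sym.
Qed.

Lemma card2 : (2 <= #|{perm 'I_n}|)%N.
Proof.
rewrite card_gT; apply: leq_trans fact_ge; rewrite -[2%N]/(1*1*2)%N.
by apply: leq_mul; [apply: leq_mul|]; lia.
Qed.

Lemma s_W2 : s \in words_of_length Spos 2.
Proof. by apply/W2P; exists (s * t); [exact: st_in | exists t; [exact: t_in| exact: s_eq]]. Qed.

Lemma sinv_W2 : s^-1 \in words_of_length Spos 2.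
Proof.
apply/W2P; exists t^-1; first exact: Spos_sym t_in.
exists (s * t)^-1; first exact: Spos_sym st_in.
by rewrite -invMg -s_eq.
Qed.

Lemma wl_pos : wordlen Spos s = 2%N.
Proof.
apply/eqP; rewrite eqn_leq; apply/andP; split.
  by apply: wl_le; [exact: card2 | exact: s_W2].
apply: wl_ge => //; first by rewrite ltnS; apply: leq_trans card2.
by move=> [|[|]] // _; rewrite ?W1 /= ?in_set1 ?s_ne1 // inSpos eqxx andbF.
Qed.

Lemma card_conj (c : {perm 'I_n}) : (#|[set a : {perm 'I_n} | (s ^ a)%g == c]| <= n)%N.
Proof.
have := @leq_card_in _ _ (fun a : {perm 'I_n} => a x0) [set a : {perm 'I_n} | (s ^ a)%g == c].
rewrite card_ord; apply.
move=> a b; rewrite !inE => /eqP ha /eqP hb /= e.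
have step k : a ((s ^+ k) x0) = b ((s ^+ k) x0).
  elim: k => [|k IH]; first by rewrite expg0 perm1.
  by rewrite expgSr !permM -(permJ s a) -(permJ s b) ha hb IH.
apply/permP => z.
have hz : (s ^+ (z + (n - x0))) x0 = z.
  apply: val_inj; rewrite sX addnCA subnKC ?(ltnW (ltn_ord x0)) //.
  by rewrite modnDr modn_small.
by rewrite -hz step.
Qed.

Definition Bset := [set a : {perm 'I_n} | (s ^ a)%g == s] :|: [set a | (s ^ a)%g == s^-1].

Lemma card_B : (#|Bset| <= 2 * n)%N.
Proof.
have [h _] := leq_card_setU [set a : {perm 'I_n} | (s ^ a)%g == s] [set a | (s ^ a)%g == s^-1].
apply: leq_trans h _; rewrite mul2n -addnn; apply: leq_add; exact: card_conj.
Qed.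

Lemma sum_pos : (\sum_(a in Spos) wordlen Spos (s ^ a)%g <= #|Spos| + 2 * n)%N.
Proof.
rewrite (big_setID Bset) /=.
have e := cardsID Bset Spos.
have h1 : (\sum_(a in Spos :&: Bset) wordlen Spos (s ^ a)%g <= #|Spos :&: Bset| * 2)%N.
  rewrite -sum_nat_const; apply: leq_sum => a; rewrite in_setI => /andP[_].
  rewrite in_setU !inE => hB.
  apply: wl_le; first exact: card2.
  by case/orP: hB => /eqP ->; [exact: s_W2 | exact: sinv_W2].
have h2 : (\sum_(a in Spos :\: Bset) wordlen Spos (s ^ a)%g <= #|Spos :\: Bset| * 1)%N.
  rewrite -sum_nat_const; apply: leq_sum => a; rewrite in_setD => /andP[hB _].
  apply: wl_le; first exact: leq_trans card2.
  move: hB; rewrite in_setU !inE negb_or => /andP[k1 k2].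
  rewrite W1 inSpos k1 k2 !andbT.
  by apply/eqP => h; move: (conj_nofix a x0); rewrite h perm1 eqxx.
have h3 : (#|Spos :&: Bset| <= #|Bset|)%N by apply: subset_leq_card; apply: subsetIr.
apply: leq_trans (leq_add h1 h2) _.
rewrite -e muln2 -addnn muln1 -!addnA leq_add2l [X in (X <= _)%N]addnC leq_add2l.
exact: leq_trans h3 card_B.
Qed.

Lemma card_Spos : (n`! <= #|Spos| + 3)%N.
Proof.
have := cardsC [set 1; s; s^-1]; rewrite card_gT -/Spos => <-.
rewrite addnC leq_add2l.
have [h _] := leq_card_setU ([set 1] :|: [set s]) [set s^-1].
have [h' _] := leq_card_setU [set 1] [set s].
move: h h'; rewrite !cards1; lia.
Qed.

End Cyc.

Local Open Scope ring_scope.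

Lemma pos_real (R : realType) (eps : R) (sum c n M : nat) : 0 < eps ->
  (sum <= c + 2 * n)%N -> (2 * n * M <= c)%N -> 1 < eps * M%:R -> (0 < c)%N ->
  sum%:R / c%:R < 1 + eps.
Proof.
move=> he h1 h2 h3 h4.
have hc : 0 < (c%:R : R) by rewrite ltr0n.
rewrite ltr_pdivrMr //.
have r1 : (sum%:R : R) <= c%:R + 2 * n%:R.
  by have := h1; rewrite -(ler_nat R) natrD natrM.
have r2 : 2 * n%:R * M%:R <= (c%:R : R).
  by have := h2; rewrite -(ler_nat R) !natrM.
have r0 : 0 <= (n%:R : R) by rewrite ler0n.
have r5 : 0 <= (M%:R : R) by rewrite ler0n.
nra.
Qed.

Lemma neg_real (R : realType) (eps : R) (sum c t M : nat) : 0 < eps ->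
  (3 * t <= sum)%N -> (c <= t + 2)%N -> (t <= c)%N -> (6 * M <= t)%N ->
  1 < eps * M%:R -> (0 < t)%N -> 3 - eps < sum%:R / c%:R.
Proof.
move=> he h1 h2 h2' h3 h4 h5.
have hc : 0 < (c%:R : R) by rewrite ltr0n; lia.
rewrite ltr_pdivlMr //.
have r1 : 3 * (t%:R : R) <= sum%:R.
  by have := h1; rewrite -(ler_nat R) natrM.
have r2 : (c%:R : R) <= t%:R + 2.
  by have := h2; rewrite -(ler_nat R) natrD.
have r2' : (t%:R : R) <= c%:R by rewrite ler_nat.
have r3 : 6 * (M%:R : R) <= t%:R.
  by have := h3; rewrite -(ler_nat R) natrM.
have r5 : 0 <= (M%:R : R) by rewrite ler0n.
nra.
Qed.


Theorem mainTheorem15 (R : realType) (eps : R) (heps : 0 < eps) :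
  exists N : nat, forall n : nat, (N <= n)%N ->
    exists Spos Sneg : {set {perm 'I_n}},
      [/\ sym_gen_set Spos,
          wordlen Spos (ncycle n) = 2%N,
          Av R Spos (ncycle n) < 1 + eps &
          kappa R Spos (ncycle n) > (1 - eps) / 2]
      /\
      [/\ sym_gen_set Sneg,
          wordlen Sneg (ncycle n) = 1%N,
          Av R Sneg (ncycle n) > 3 - eps &
          kappa R Sneg (ncycle n) < -2 + eps].
Proof.
set M := Num.bound (eps^-1).
have hM : 1 < eps * M%:R.
  have h0 : 0 <= eps^-1 by rewrite invr_ge0 ltW.
  have h := archi_boundP h0.
  have : eps * eps^-1 < eps * M%:R by rewrite ltr_pM2l.
  by rewrite mulfV ?gt_eqF.
exists (6 * M + 5)%N => n hn.
have n5 : (5 <= n)%N by lia.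
exists (Spos n), (Sneg n).
have hSp := card_Spos n5; have hf := fact_ge n5.
have hApos : Av R (Spos n) (ncycle n) < 1 + eps.
  have k1 : (2 * M + 3 <= (n - 1) * (n - 2))%N.
    apply: (@leq_trans (1 * (n - 2))); first lia.
    by apply: leq_mul; lia.
  have k2 : (n * (2 * M + 3) <= n * ((n - 1) * (n - 2)))%N by rewrite leq_mul2l k1 orbT.
  rewrite mulnA in k2.
  rewrite /Av -natr_sum; apply: (pos_real heps (sum_pos n5) _ hM); nia.
have hT := card_Tn n5.
have hAneg : 3 - eps < Av R (Sneg n) (ncycle n).
  rewrite /Av -natr_sum.
  apply: (neg_real heps (sum_neg n5)).
  - exact: card_Sneg.
  - by apply: subset_leq_card; apply: subsetUr.
  - have : (6 * M <= #|Tn n|)%N by lia. exact.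
  - exact: hM.
  - lia.
split; split.
- exact: Spos_gen.
- exact: wl_pos.
- exact: hApos.
- rewrite /kappa wl_pos // ltr_pM2r ?invr_gt0 ?ltr0n //; lra.
- exact: Sneg_gen.
- exact: wl_neg.
- exact: hAneg.
- rewrite /kappa wl_neg // divr1; lra.
Qed.
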